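(* Let $d\ge 8$ be an even integer and let $B$ be a bubble gadget that is properly attached to $S$ in a graph $G$. Then no two distinct vertices of $B$ are $d$-twins in the induced subgraph $G[V(B)\cup S]$.
   Context: Two distinct vertices $u,v$ of a graph $H$ are $d$-twins in $H$ if $|(N_H(u)\setminus N_H[v])\cup(N_H(v)\setminus N_H[u])|\le d$ (open/closed neighborhoods). The $a\times b$ rook graph has vertex set $\{(i,j): i\in[a], j\in[b]\}$, two distinct vertices being adjacent iff they agree in the first or in the second coordinate; view it as a grid with rows and columns. A bubble gadget $B$ (for $d$) is the $w\times w$ rook graph with $w=d/2+2$, minus the two rightmost vertices of its top row (so the top row has $d/2$ vertices and the rightmost column has $d/2+1$ vertices). If $B$ is an induced subgraph of a graph $G$ and $S$ is the set of vertices of $V(G)\setminus V(B)$ having a neighbor in $V(B)$, then $B$ is properly attached to $S$ in $G$ if every vertex of the top row and every vertex of the rightmost column of $B$ has one or two neighbors in $V(G)\setminus V(B)$, while every other vertex of $B$ has no neighbor outside $V(B)$. *)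

(* Defs.v *)
From mathcomp Require Import all_boot.
Set Implicit Arguments. Unset Strict Implicit. Unset Printing Implicit Defensive.

Definition simple_graph (T : finType) (adj : rel T) : Prop :=
  symmetric adj /\ irreflexive adj.

(* Bubble gadget for d: the w x w rook graph, w = d/2 + 2, minus the two
   rightmost vertices of its top row.  Vertex (i, j): row i (row 0 = top),
   column j (column w-1 = rightmost). *)
Definition bub_w (d : nat) : nat := d./2 + 2.

Definition bubble_pred (d : nat) (p : 'I_(bub_w d) * 'I_(bub_w d)) : bool :=
  ~~ ((p.1 == 0 :> nat) && (d./2 <= p.2)).

Definition bubbleV (d : nat) := {p : 'I_(bub_w d) * 'I_(bub_w d) | @bubble_pred d p}.

Definition bub_adj (d : nat) (x y : bubbleV d) : bool :=
  (x != y) && (((val x).1 == (val y).1) || ((val x).2 == (val y).2)).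

Definition top_or_right (d : nat) (x : bubbleV d) : bool :=
  ((val x).1 == 0 :> nat) || ((val x).2 == (bub_w d).-1 :> nat).

Definition induced_copy (d : nat) (T : finType) (adj : rel T) (f : bubbleV d -> T) : Prop :=
  injective f /\ forall x y, adj (f x) (f y) = bub_adj x y.

Definition bubble_set (d : nat) (T : finType) (f : bubbleV d -> T) : {set T} :=
  [set f x | x in [set: bubbleV d]].

Definition attach_set (T : finType) (adj : rel T) (VB : {set T}) : {set T} :=
  [set z | (z \notin VB) && [exists y in VB, adj z y]].

Definition properly_attached (d : nat) (T : finType) (adj : rel T) (f : bubbleV d -> T) : Prop :=
  forall x : bubbleV d,
    let n := #|[set z | (z \notin bubble_set f) && adj (f x) z]| in
    if top_or_right x then (n == 1) || (n == 2) else n == 0.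

Definition d_twins (T : finType) (adj : rel T) (VH : {set T}) (d : nat) (u v : T) : Prop :=
  [/\ u \in VH, v \in VH, u != v &
   #|[set z in VH | ((adj u z && ~~ adj v z && (z != v))
                   || (adj v z && ~~ adj u z && (z != u)))]| <= d].

(* Main.v *)
Require Import Defs.
From mathcomp Require Import all_boot zify.
Set Implicit Arguments. Unset Strict Implicit. Unset Printing Implicit Defensive.

Lemma cardlt (n m : nat) : m <= n -> #|[set t : 'I_n | t < m]| = m.
Proof.
move=> hm.
have -> : [set t : 'I_n | t < m] = widen_ord hm @: [set: 'I_m].
  apply/setP=> t; rewrite inE; apply/idP/imsetP => [lt|[s _ ->]] /=; last by rewrite ltn_ord.
  by exists (Ordinal lt); rewrite ?inE //; apply: val_inj.
rewrite card_imset ?cardsT ?card_ord //.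
by move=> i j /(congr1 val) /= h; apply: ord_inj.
Qed.

Lemma cnt n (A : {set 'I_n}) (s : seq 'I_n) : #|A| - size s <= #|[set t in A | t \notin s]|.
Proof.
have -> : [set t in A | t \notin s] = A :\: [set t in s] by apply/setP=> t; rewrite !inE andbC.
rewrite cardsD.
have h1 : #|A :&: [set t in s]| <= #|[set t in s]| by apply: subset_leq_card; apply: subsetIr.
have h2 : #|[set t in s]| <= size s by rewrite cardsE; apply: card_size.
lia.
Qed.

Lemma cardU_disj (T : finType) (A B : {set T}) : A :&: B = set0 -> #|A :|: B| = #|A| + #|B|.
Proof. by move=> h; rewrite cardsU h cards0 subn0. Qed.

Section Bub.
Variable d : nat.
Local Notation k := d./2.
Local Notation w := (bub_w d).
Local Notation V := (bubbleV d).

Lemma card_row (a : 'I_w) (R : pred 'I_w) :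
  #|[set z : V | ((val z).1 == a) && R (val z).2]| = #|[set t | bubble_pred (a,t) && R t]|.
Proof.
rewrite -(@card_in_imset _ _ (fun z : V => (val z).2)).
  apply: eq_card => t; rewrite [RHS]inE; apply/imsetP/idP.
  - case=> z; rewrite inE => /andP[/eqP ha hr] ->.
    rewrite -ha -surjective_pairing hr andbT; exact: valP.
  - case/andP => hb hr. exists (exist (@bubble_pred d) (a,t) hb) => //.
    by rewrite inE /= eqxx hr.
move=> z1 z2; rewrite !inE => /andP[/eqP h1 _] /andP[/eqP h2 _] h.
apply: val_inj. by rewrite [val z1]surjective_pairing [val z2]surjective_pairing h1 h2 h.
Qed.

Lemma card_col (c : 'I_w) (R : pred 'I_w) :
  #|[set z : V | ((val z).2 == c) && R (val z).1]| = #|[set t | bubble_pred (t,c) && R t]|.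
Proof.
rewrite -(@card_in_imset _ _ (fun z : V => (val z).1)).
  apply: eq_card => t; rewrite [RHS]inE; apply/imsetP/idP.
  - case=> z; rewrite inE => /andP[/eqP ha hr] ->.
    rewrite -ha -surjective_pairing hr andbT; exact: valP.
  - case/andP => hb hr. exists (exist (@bubble_pred d) (t,c) hb) => //.
    by rewrite inE /= eqxx hr.
move=> z1 z2; rewrite !inE => /andP[/eqP h1 _] /andP[/eqP h2 _] h.
apply: val_inj. by rewrite [val z1]surjective_pairing [val z2]surjective_pairing h1 h2 h.
Qed.

Lemma kw : k <= w. Proof. rewrite /bub_w; lia. Qed.

Lemma row_cnt (a : 'I_w) (s : seq 'I_w) :
  (if a == 0 :> nat then k else w) - size s <= #|[set z : V | ((val z).1 == a) && ((val z).2 \notin s)]|.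
Proof.
rewrite (card_row a (fun t => t \notin s)); case: ifP => ha.
- have -> : [set t | bubble_pred (a,t) && (t \notin s)] = [set t in [set t : 'I_w | t < k] | t \notin s].
    by apply/setP=> t; rewrite !inE /bubble_pred /= ha /= -ltnNge.
  by have := cnt [set t : 'I_w | t < k] s; rewrite cardlt // kw.
- have -> : [set t | bubble_pred (a,t) && (t \notin s)] = [set t in [set: 'I_w] | t \notin s].
    by apply/setP=> t; rewrite !inE /bubble_pred /= ha.
  by have := cnt [set: 'I_w] s; rewrite cardsT card_ord.
Qed.

Lemma col_cnt (c : 'I_w) (s : seq 'I_w) :
  (if k <= c then w.-1 else w) - size s <= #|[set z : V | ((val z).2 == c) && ((val z).1 \notin s)]|.
Proof.
rewrite (card_col c (fun t => t \notin s)); case: ifP => hc.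
- have -> : [set t | bubble_pred (t,c) && (t \notin s)] = [set t in ~: [set t : 'I_w | t < 1] | t \notin s].
    by apply/setP=> t; rewrite !inE /bubble_pred /= hc andbT ltnS leqn0.
  have := cnt (~: [set t : 'I_w | t < 1]) s.
  by rewrite cardsCs setCK cardlt ?card_ord ?subn1 // /bub_w addn2.
- have -> : [set t | bubble_pred (t,c) && (t \notin s)] = [set t in [set: 'I_w] | t \notin s].
    by apply/setP=> t; rewrite !inE /bubble_pred /= hc andbF.
  by have := cnt [set: 'I_w] s; rewrite cardsT card_ord.
Qed.

Lemma neqV (x z : V) : (z != x) = ((val z).1 != (val x).1 :> nat) || ((val z).2 != (val x).2 :> nat).
Proof.
rewrite -negb_and; congr (~~ _); apply/eqP/andP => [->|[/eqP h1 /eqP h2]] //.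
Qed.


Lemma oeq n (i j : 'I_n) : (i == j) = (i == j :> nat). Proof. by []. Qed.

Definition Dset (x y : V) : {set V} :=
  [set z | (bub_adj x z && ~~ bub_adj y z && (z != y)) || (bub_adj y z && ~~ bub_adj x z && (z != x))].

Ltac bsolve := move=> z; rewrite ?inE /bub_adj ?neqV /= ?oeq; lia.

Lemma keyD (hk : 4 <= k) (hd : d = k + k) (x y : V) : x != y ->
  d < #|Dset x y| \/ (d <= #|Dset x y| /\
     ((top_or_right x && ~~ top_or_right y) || (top_or_right y && ~~ top_or_right x))).
Proof.
case: x => [[a b] hx]; case: y => [[c e] hy] hxy.
rewrite neqV /= ?oeq in hxy.
have hx' := hx; have hy' := hy.
rewrite /bubble_pred /= in hx' hy'.
rewrite /top_or_right /=.
have ha := ltn_ord a; have hb := ltn_ord b; have hc := ltn_ord c; have he := ltn_ord e.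
have hw : bub_w d = k + 2 by [].
set D := Dset _ _.
move Dn : #|D| => n.
case: (eqVneq (a : nat) c) => hac.
-
  set C1 := [set z : V | ((val z).2 == b) && ((val z).1 \notin [:: a])].
  set C2 := [set z : V | ((val z).2 == e) && ((val z).1 \notin [:: a])].
  have sub : C1 :|: C2 \subset D.
    apply/subsetP; rewrite /C1 /C2 /D /Dset; bsolve.
  have dis : C1 :&: C2 = set0.
    apply/setP; rewrite /C1 /C2; bsolve.
  have := subset_leq_card sub; rewrite cardU_disj // Dn.
  have h1 : _ <= #|C1| := col_cnt b [:: a].
  have h2 : _ <= #|C2| := col_cnt e [:: a].
  move: h1 h2; rewrite /=.
  case: ifP; case: ifP; lia.
- case: (eqVneq (b : nat) e) => hbe.
  +
    set R1 := [set z : V | ((val z).1 == a) && ((val z).2 \notin [:: b])].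
    set R2 := [set z : V | ((val z).1 == c) && ((val z).2 \notin [:: b])].
    have sub : R1 :|: R2 \subset D.
      apply/subsetP; rewrite /R1 /R2 /D /Dset; bsolve.
    have dis : R1 :&: R2 = set0.
      apply/setP; rewrite /R1 /R2; bsolve.
    have := subset_leq_card sub; rewrite cardU_disj // Dn.
    have h1 : _ <= #|R1| := row_cnt a [:: b].
    have h2 : _ <= #|R2| := row_cnt c [:: b].
    move: h1 h2; rewrite /=.
    case: ifP; case: ifP; lia.
  + set R1 := [set z : V | ((val z).1 == a) && ((val z).2 \notin [:: b; e])].
    set R2 := [set z : V | ((val z).1 == c) && ((val z).2 \notin [:: b; e])].
    set C1 := [set z : V | ((val z).2 == b) && ((val z).1 \notin [:: a; c])].
    have sub : R1 :|: R2 :|: C1 \subset D.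
      apply/subsetP; rewrite /R1 /R2 /C1 /D /Dset; bsolve.
    have dis : R1 :&: R2 = set0.
      apply/setP; rewrite /R1 /R2; bsolve.
    have dis2 : (R1 :|: R2) :&: C1 = set0.
      apply/setP; rewrite /R1 /R2 /C1; bsolve.
    have := subset_leq_card sub; rewrite cardU_disj // cardU_disj // Dn.
    have h1 : _ <= #|R1| := row_cnt a [:: b; e].
    have h2 : _ <= #|R2| := row_cnt c [:: b; e].
    have h3 : _ <= #|C1| := col_cnt b [:: a; c].
    move: h1 h2 h3; rewrite /=.
    case: ifP; case: ifP; case: ifP; lia.
Qed.

End Bub.

Theorem mainTheorem10 (d : nat) (T : finType) (adj : rel T)
  (hG : simple_graph adj) (hd8 : 8 <= d) (hdeven : ~~ odd d)
  (f : bubbleV d -> T) (hB : induced_copy adj f) (hP : properly_attached adj f) :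
  forall x y : bubbleV d, x != y ->
    ~ d_twins adj (bubble_set f :|: attach_set adj (bubble_set f)) d (f x) (f y).
Proof.
move=> x y hxy [hu hv huv].
have [hinj hadj] := hB; have [hsym hirr] := hG.
set VB := bubble_set f; set VH := VB :|: attach_set adj VB.
set X := [set z in VH | _].
have hd : d = d./2 + d./2.
  have := odd_double_half d; rewrite (negbTE hdeven) add0n addnn; by move->.
have hk : 4 <= d./2 by lia.
have fVB : forall z, f z \in VB by move=> z; apply: imset_f; exact: in_setT.
have sub : f @: Dset x y \subset X.
  apply/subsetP => _ /imsetP [z hz ->]; rewrite inE in hz.
  rewrite inE; apply/andP; split; first by rewrite inE fVB.
  by rewrite !hadj !(inj_eq hinj).
have cD : #|f @: Dset x y| = #|Dset x y| by apply: card_imset.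
have extra : forall a b, top_or_right a -> ~~ top_or_right b ->
    exists z0, [/\ z0 \in VH, z0 \notin VB, adj (f a) z0 & ~~ adj (f b) z0].
  move=> a b ha hb.
  have := hP a; rewrite /= ha => h1.
  have : 0 < #|[set z | (z \notin bubble_set f) && adj (f a) z]| by case/orP: h1 => /eqP ->.
  case/card_gt0P => z0; rewrite inE => /andP[h2 h3].
  exists z0; split => //.
  + rewrite inE; apply/orP; right; rewrite inE h2 /=.
    apply/existsP; exists (f a); by rewrite fVB hsym.
  + have := hP b; rewrite /= (negbTE hb) => /eqP /cards0_eq /setP /(_ z0).
    by rewrite !inE h2 /= => ->.
have fD : forall z, z \in f @: Dset x y -> z \in VB.
  by move=> _ /imsetP [z _ ->]; apply: fVB.
case: (keyD hk hd hxy) => [h | [h htr]].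
  have := subset_leq_card sub; lia.
have [z0 [h1 h2 h3 h4]] : exists z0, [/\ z0 \in X, z0 \notin VB, adj (f x) z0 || adj (f y) z0 & true].
  case/orP: htr => /andP [ha hb].
  - have [z0 [g1 g2 g3 g4]] := extra _ _ ha hb.
    exists z0; split => //; last by rewrite g3.
    rewrite inE g1 /= g3 g4 /=.
    by apply/orP; left; apply: contraNneq g2 => ->; apply: fVB.
  - have [z0 [g1 g2 g3 g4]] := extra _ _ ha hb.
    exists z0; split => //; last by rewrite g3 orbT.
    rewrite inE g1 /= g3 g4 /=.
    by apply/orP; right; apply: contraNneq g2 => ->; apply: fVB.
have sub2 : z0 |: f @: Dset x y \subset X.
  by rewrite subUset sub1set h1 sub.
have := subset_leq_card sub2; rewrite cardsU1 cD.
have -> : z0 \notin f @: Dset x y by apply: contra h2; apply: fD.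
lia.
Qed.
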